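(* Let $R$ be a commutative ring and $M$ an $R$-module. The following are equivalent: (1) $M$ is a coherent $R$-module (finitely generated, with every finitely generated submodule finitely presented); (2) $M$ is $u$-$(R\setminus\mathfrak p)$-coherent for every prime ideal $\mathfrak p$ of $R$; (3) $M$ is $u$-$(R\setminus\mathfrak m)$-coherent for every maximal ideal $\mathfrak m$ of $R$.
   Context: For a multiplicative subset $S$ of $R$ (containing $1$, closed under products): $M$ is $S$-finite with respect to $s\in S$ if there is a finitely generated submodule $F\subseteq M$ with $sM\subseteq F$; $M$ is $u$-$S$-finitely presented with respect to $s$ if there is an exact sequence $0\to T_1\to F\to M\to T_2\to 0$ with $F$ finitely presented and $sT_1=sT_2=0$; $M$ is $u$-$S$-coherent if there is $s\in S$ such that $M$ is $S$-finite with respect to $s$ and every finitely generated submodule of $M$ is $u$-$S$-finitely presented with respect to $s$. *)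

(* Defs.v *)
From HB Require Import structures.
From mathcomp Require Import all_boot all_order all_algebra.
Set Implicit Arguments. Unset Strict Implicit. Unset Printing Implicit Defensive.
Import GRing.Theory.
Local Open Scope ring_scope.

Section Defs.
Variable R : comPzRingType.

Definition is_ideal (I : R -> Prop) : Prop :=
  I 0 /\ (forall a b, I a -> I b -> I (a + b)) /\ (forall r a, I a -> I (r * a)).

Definition prime_ideal (P : R -> Prop) : Prop :=
  is_ideal P /\ ~ P 1 /\ (forall a b, P (a * b) -> P a \/ P b).

Definition maximal_ideal (P : R -> Prop) : Prop :=
  is_ideal P /\ ~ P 1 /\
  (forall J : R -> Prop, is_ideal J -> (forall a, P a -> J a) ->
     (forall a, J a -> P a) \/ J 1).

Section Module.
Variable M : lmodType R.

Definition span (n : nat) (x : 'I_n -> M) : M -> Prop :=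
  fun m => exists c : 'I_n -> R, m = \sum_(i < n) c i *: x i.

Definition fg_sub (N : M -> Prop) : Prop :=
  exists (n : nat) (x : 'I_n -> M), forall m, N m <-> span x m.

End Module.

Section Module2.
Variable M : lmodType R.

Definition fin_pres_sub (N : M -> Prop) : Prop :=
  exists (n : nat) (x : 'I_n -> M),
    (forall m, N m <-> span x m) /\
    @fg_sub 'rV[R]_n (fun c : 'rV[R]_n => \sum_(i < n) c ord0 i *: x i = 0).

Definition fin_gen : Prop := fg_sub (fun _ : M => True).
Definition fin_pres : Prop := fin_pres_sub (fun _ : M => True).

End Module2.

Section Module3.
Variable M : lmodType R.

Definition coherent : Prop :=
  fin_gen M /\ forall N : M -> Prop, fg_sub N -> fin_pres_sub N.

Definition S_finite_wrt (s : R) : Prop :=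
  exists (n : nat) (x : 'I_n -> M), forall m, span x (s *: m).

(* the submodule N of M is u-S-finitely presented with respect to s:
   there is an exact sequence 0 -> T1 -> F -> N -> T2 -> 0 with F finitely
   presented and s T1 = s T2 = 0; i.e. a linear map f : F -> N with
   T1 = ker f and T2 = N / im f. *)
Definition uS_fin_pres_sub_wrt (s : R) (N : M -> Prop) : Prop :=
  exists (F : lmodType R) (f : {linear F -> M}),
    fin_pres F /\
    (forall z, N (f z)) /\
    (forall z, f z = 0 -> s *: z = 0) /\
    (forall y, N y -> exists z, f z = s *: y).

Definition uS_coherent (S : R -> Prop) : Prop :=
  exists s, S s /\ S_finite_wrt s /\
    forall N : M -> Prop, fg_sub N -> uS_fin_pres_sub_wrt s N.

End Module3.
End Defs.

(* Main.v *)
Require Import Defs.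
From HB Require Import structures.
From mathcomp Require Import all_boot all_order all_algebra.
From mathcomp Require Import boolp classical_sets.
From Stdlib Require Import Classical_Prop.
Set Implicit Arguments. Unset Strict Implicit. Unset Printing Implicit Defensive.
Import GRing.Theory.
Local Open Scope ring_scope.

Section Comb.
Variable R : comPzRingType.

Definition comb (V : lmodType R) n (y : 'I_n -> V) (c : 'rV[R]_n) : V :=
  \sum_(i < n) c ord0 i *: y i.

Lemma combD (V : lmodType R) n (y : 'I_n -> V) u v : comb y (u + v) = comb y u + comb y v.
Proof. by rewrite /comb -big_split; apply: eq_bigr => i _; rewrite mxE scalerDl. Qed.
Lemma combZ (V : lmodType R) n (y : 'I_n -> V) a u : comb y (a *: u) = a *: comb y u.
Proof. by rewrite /comb scaler_sumr; apply: eq_bigr => i _; rewrite mxE scalerA. Qed.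
Lemma comb0 (V : lmodType R) n (y : 'I_n -> V) : comb y 0 = 0.
Proof. by rewrite /comb big1 // => i _; rewrite mxE scale0r. Qed.
Lemma comb_sum (V : lmodType R) n (y : 'I_n -> V) k (d : 'I_k -> R) g :
  comb y (\sum_(q < k) d q *: g q) = \sum_(q < k) d q *: comb y (g q).
Proof.
rewrite (big_morph (comb y) (combD y) (comb0 y)).
by apply: eq_bigr => q _; rewrite combZ.
Qed.
Lemma comb_delta (V : lmodType R) n (y : 'I_n -> V) i : comb y (delta_mx 0 i) = y i.
Proof.
rewrite /comb (bigD1 i) //= big1 => [|j nji]; first by rewrite mxE !eqxx scale1r addr0.
by rewrite mxE (negbTE nji) andbF scale0r.
Qed.
Lemma comb_lin (V W : lmodType R) (f : {linear V -> W}) n (y : 'I_n -> V) c :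
  f (comb y c) = comb (fun i => f (y i)) c.
Proof. by rewrite /comb linear_sum; apply: eq_bigr => i _; rewrite linearZ. Qed.
Lemma comb_mul (V : lmodType R) n k (y : 'I_n -> V) (v : 'rV_k) (A : 'M_(k, n)) :
  comb y (v *m A) = comb (fun j => comb y (row j A)) v.
Proof.
rewrite /comb; under eq_bigr do rewrite mxE scaler_suml.
rewrite exchange_big; apply: eq_bigr => j _; rewrite scaler_sumr.
by apply: eq_bigr => i _; rewrite !mxE scalerA.
Qed.
Lemma span_comb (V : lmodType R) n (y : 'I_n -> V) u :
  Defs.span y u <-> exists r, u = comb y r.
Proof.
split=> [[c ->]|[r ->]]; last by exists (fun i => r ord0 i).
by exists (\row_i c i); rewrite /comb; apply: eq_bigr => i _; rewrite mxE.
Qed.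
Lemma span_gen (V : lmodType R) n (y : 'I_n -> V) i : Defs.span y (y i).
Proof. by apply/span_comb; exists (delta_mx 0 i); rewrite comb_delta. Qed.
Lemma row_comb n (c : 'rV[R]_n) : c = comb (fun i => delta_mx 0 i) c.
Proof. exact: row_sum_delta. Qed.

End Comb.

Section Glue.
Variable R : comPzRingType.
Local Open Scope classical_set_scope.

Definition Gd (P : lmodType R) (X : P -> Prop) (t : R) :=
  exists k (g : 'I_k -> P), (forall i, X (g i)) /\ forall c, X c -> Defs.span g (t *: c).

Lemma Gd_ideal (P : lmodType R) (X : P -> Prop) : is_ideal (Gd X).
Proof.
split; [|split].
- exists 0%N, (fun _ => 0); split; first by case.
  by move=> c _; exists (fun _ => 0); rewrite scale0r big_ord0.
- move=> a b [k1 [g1 [H1 K1]]] [k2 [g2 [H2 K2]]].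
  exists (k1 + k2)%N, (fun q => match split q with inl i => g1 i | inr j => g2 j end).
  split; first by move=> q; case: (split q).
  move=> c Xc; have [c1 e1] := K1 c Xc; have [c2 e2] := K2 c Xc.
  exists (fun q => match split q with inl i => c1 i | inr j => c2 j end).
  rewrite scalerDl e1 e2 big_split_ord /=; congr (_ + _); apply: eq_bigr => i _.
    by rewrite (@unsplitK k1 k2 (inl i)).
  by rewrite (@unsplitK k1 k2 (inr i)).
- move=> r a [k [g [H K]]]; exists k, g; split=> // c Xc.
  have [d e] := K c Xc; exists (fun i => r * d i).
  by rewrite -scalerA e scaler_sumr; apply: eq_bigr => i _; rewrite scalerA.
Qed.

Lemma glue (P : lmodType R) (X : P -> Prop) :
  (forall mx, maximal_ideal mx -> exists t, ~ mx t /\ Gd X t) -> Gd X 1.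
Proof.
move=> Hloc; apply: NNPP => nG1.
have [I0 [ID IM]] := Gd_ideal X.
pose Pf := fun J : set R => J = set0 \/ (is_ideal J /\ (forall a, Gd X a -> J a) /\ ~ J 1).
have [A [PA Amax]] : exists A, Pf A /\ forall B, A `<` B -> ~ Pf B.
  apply: Zorn_bigcup => F FP Ftot.
  have Fcase : forall Y, F Y -> forall a, Y a ->
      is_ideal Y /\ (forall a, Gd X a -> Y a) /\ ~ Y 1.
    by move=> Y FY a Ya; case: (FP Y FY) => [E|//]; rewrite E in Ya.
  case: (classic (exists Y, F Y /\ Y 0)) => [[Y0 [FY0 Y00]]|nE].
  - right; split; [split; [|split]|split].
    + by exists Y0.
    + move=> a b [Y1 FY1 Y1a] [Y2 FY2 Y2b].
      have [I1 _] := Fcase _ FY1 _ Y1a; have [I2 _] := Fcase _ FY2 _ Y2b.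
      case: (Ftot _ _ FY1 FY2) => S12.
        by exists Y2 => //; apply: I2.2.1 => //; apply: S12.
      by exists Y1 => //; apply: I1.2.1 => //; apply: S12.
    + move=> r a [Y1 FY1 Y1a]; have [I1 _] := Fcase _ FY1 _ Y1a.
      by exists Y1 => //; apply: I1.2.2.
    + by move=> a Ga; exists Y0 => //; apply: (Fcase _ FY0 _ Y00).2.1.
    + by move=> [Y1 FY1 Y11]; apply: (Fcase _ FY1 _ Y11).2.2.
  - left; apply/seteqP; split=> a //= [Y FY Ya].
    apply: nE; exists Y; split => //; exact: (Fcase _ FY _ Ya).1.1.
have PI : Pf (Gd X) by right; split=> //; split.
have [E|[AI [AG A1]]] := PA.
  apply: (Amax (Gd X)) PI; rewrite E; split=> // S; exact: (S 0 I0).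
have Amx : maximal_ideal A.
  split=> //; split=> // J HJ AJ.
  case: (classic (J 1)) => [|nJ1]; [by right|left].
  move=> a Ja; apply: NNPP => nAa.
  apply: (Amax J); first by split=> // S; apply: nAa; exact: S.
  by right; split=> //; split=> // b Gb; apply: AJ; apply: AG.
have [t [nAt Gt]] := Hloc A Amx.
by apply: nAt; apply: AG.
Qed.
End Glue.

Section Local.
Variable R : comPzRingType.

Lemma max_prime (P : R -> Prop) : maximal_ideal P -> prime_ideal P.
Proof.
move=> [[P0 [PD PM]] [P1 Pmax]]; split; first by split.
split=> // a b Pab; case: (classic (P a)) => [|nPa]; [by left|right].
pose J := fun x => exists p r, P p /\ x = p + r * a.
have HJ : is_ideal J.
  split; [exists 0, 0; split=> //; by rewrite mul0r addr0|split].
  - move=> x y [p [r [Pp ->]]] [p' [r' [Pp' ->]]]; exists (p + p'), (r + r').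
    by split; [exact: PD|rewrite mulrDl addrACA].
  - move=> c x [p [r [Pp ->]]]; exists (c * p), (c * r); split; first exact: PM.
    by rewrite mulrDr mulrA.
have PJ0 : forall x, P x -> J x by move=> x Px; exists x, 0; rewrite mul0r addr0.
case: (Pmax J HJ PJ0) => [PJ|[p [r [Pp E]]]].
  by exfalso; apply: nPa; apply: PJ; exists 0, 1; rewrite add0r mul1r.
have -> : b = b * p + r * (a * b) by rewrite -{1}(mulr1 b) E mulrDr [b * (r * a)]mulrCA (mulrC b a).
by apply: PD; apply: PM.
Qed.

Lemma local_syz (M : lmodType R) n (y : 'I_n -> M) (s : R) (F : lmodType R)
  (f : {linear F -> M}) :
  fin_pres F -> (forall z, Defs.span y (f z)) -> (forall z, f z = 0 -> s *: z = 0) ->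
  (forall u, Defs.span y u -> exists z, f z = s *: u) ->
  Gd (fun c => comb y c = 0) (s * s).
Proof.
rewrite /fin_pres /fin_pres_sub /fg_sub => -[kz [z [Hz [kl [l Hl]]]]] Himg Hker Hcok.
have [ra Hra] : exists ra : 'I_kz -> 'rV[R]_n, forall j, f (z j) = comb y (ra j).
  by apply: (@fin_all_exists _ (fun _ => 'rV[R]_n) (fun j r => f (z j) = comb y r)) => j; apply/span_comb.
pose A : 'M[R]_(kz, n) := \matrix_j ra j.
have rowA j : row j A = ra j by rewrite rowK.
have [rb Hrb] : exists rb : 'I_n -> 'rV[R]_kz, forall i, f (comb z (rb i)) = s *: y i.
  apply: (@fin_all_exists _ (fun _ => 'rV[R]_kz) (fun i r => f (comb z r) = s *: y i)) => i; have [w Hw] := Hcok _ (span_gen y i).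
  have /span_comb [r Er] := (proj1 (Hz w) I); by exists r; rewrite -Er.
have key v : comb y (v *m A) = f (comb z v).
  by rewrite comb_mul comb_lin; congr comb; apply: funext => j; rewrite rowA Hra.
pose g := fun q : 'I_(n + kl) => match split q with
  | inl i => s *: delta_mx 0 i - rb i *m A | inr j => l j *m A end.
exists (n + kl)%N, g; split.
  move=> q; rewrite /g; case: (split q) => [i|j].
    by rewrite combD -scaleN1r !combZ key Hrb comb_delta scaleN1r subrr.
  have /(Hl (l j)).2 /= E := span_gen l j.
  by rewrite key /comb E linear0.
move=> c Kc.
have [v Ev] : exists v, v = comb rb c by exists (comb rb c).
have Hv : comb z (s *: v) = 0.
  rewrite combZ; apply: Hker; rewrite Ev [comb rb c]/comb comb_sum linear_sum.
  rewrite (eq_bigr (fun i => s *: (c ord0 i *: y i))); last first.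
    by move=> i _; rewrite linearZ Hrb scalerA mulrC -scalerA.
  by rewrite -scaler_sumr; change (s *: comb y c = 0); rewrite Kc scaler0.
have /(Hl (s *: v)).1 [e Ee] := Hv.
exists (fun q => match split q with inl i => s * c ord0 i | inr j => e j end).
rewrite big_split_ord /=.
rewrite (eq_bigr (fun i => (s * c ord0 i) *: (s *: delta_mx 0 i - rb i *m A))); last first.
  by move=> i _; rewrite /g (@unsplitK n kl (inl i)).
rewrite (eq_bigr (fun j => e j *: (l j *m A))); last first.
  by move=> j _; rewrite /g (@unsplitK n kl (inr j)).
have E2 : \sum_j e j *: (l j *m A) = (s *: v) *m A.
  by rewrite Ee mulmx_suml; apply: eq_bigr => j _; rewrite scalemxAl.
have E3 : \sum_i (s * c ord0 i) *: (rb i *m A) = (s *: v) *m A.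
  rewrite Ev -scalemxAl mulmx_suml scaler_sumr; apply: eq_bigr => i _.
  by rewrite -scalemxAl scalerA.
have E4 : \sum_i (s * c ord0 i) *: (s *: delta_mx 0 i) = (s * s) *: c.
  rewrite [in RHS](row_sum_delta c) scaler_sumr; apply: eq_bigr => i _.
  by rewrite !scalerA mulrAC.
under eq_bigr do rewrite scalerBr.
by rewrite sumrB E2 E3 E4 subrK.
Qed.
End Local.
Section SubMod.
Variables (R : comPzRingType) (M : lmodType R) (n : nat) (x : 'I_n -> M).
Definition spanb : pred M := fun m => asbool (Defs.span x m).

Lemma spanb_closed : subsemimod_closed spanb.
Proof.
split; [split|].
- apply/asboolP; exists (fun _ => 0); by rewrite big1 // => i _; rewrite scale0r.
- move=> u v /asboolP [c ->] /asboolP [d ->]; apply/asboolP; exists (fun i => c i + d i).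
  by rewrite -big_split /=; apply: eq_bigr => i _; rewrite scalerDl.
- move=> a u /asboolP [c ->]; apply/asboolP; exists (fun i => a * c i).
  by rewrite scaler_sumr; apply: eq_bigr => i _; rewrite scalerA.
Qed.

Inductive subN : predArgType := SubN u & u \in spanb.
Definition subNval w : M := let: SubN u _ := w in u.
HB.instance Definition _ := [isSub of subN for subNval].
HB.instance Definition _ := [Choice of subN by <:].
HB.instance Definition _ := GRing.SubChoice_isSubLmodule.Build R M spanb subN spanb_closed.

Lemma subNval_is_linear : linear subNval. Proof. by []. Qed.
HB.instance Definition _ := GRing.isSemilinear.Build R subN M _ subNval
  (GRing.semilinear_linear subNval_is_linear).
End SubMod.

Lemma subN_fin_pres (R : comPzRingType) (M : lmodType R) n (x : 'I_n -> M) :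
  fg_sub (fun c : 'rV[R]_n => \sum_(i < n) c ord0 i *: x i = 0) -> fin_pres (subN x).
Proof.
move=> [k [g Hg]].
have px i : x i \in spanb x by rewrite unfold_in; apply/asboolP; apply: span_gen.
pose z i := SubN (px i).
have Vz r : subNval (comb z r) = comb x r.
  by rewrite (comb_lin (subNval (x:=x) : {linear subN x -> M})).
exists n, z; split.
  move=> [u pu]; split=> // _; have := pu; rewrite unfold_in => /asboolP /span_comb [r Er].
  apply/span_comb; exists r; apply: val_inj; rewrite /= Er; by rewrite -Vz.
exists k, g => c; rewrite -Hg.
change (comb z c = 0 <-> comb x c = 0); split=> E.
  by rewrite -Vz E.
by apply: val_inj; rewrite /= Vz E.
Qed.

Theorem proposition3p5 (R : comPzRingType) (M : lmodType R) :
  (coherent M <->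
     (forall p : R -> Prop, prime_ideal p -> uS_coherent M (fun s => ~ p s)))
  /\
  ((forall p : R -> Prop, prime_ideal p -> uS_coherent M (fun s => ~ p s)) <->
     (forall m : R -> Prop, maximal_ideal m -> uS_coherent M (fun s => ~ m s))).
Proof.
have H12 : coherent M -> forall p, prime_ideal p -> uS_coherent M (fun s => ~ p s).
  move=> [[n [x Hx]] Hcoh] p [_ [p1 _]]; exists 1; split=> //; split.
    by exists n, x => m; apply: (Hx _).1.
  move=> N fgN; have [n' [x' [HN Hsyz]]] := Hcoh N fgN.
  exists (subN x'), (subNval (x:=x') : {linear subN x' -> M}); split.
    exact: subN_fin_pres.
  split; [|split].
  - move=> [u pu] /=; apply/HN; have := pu; rewrite unfold_in => /asboolP.
    done.
  - by move=> z Hz; rewrite scale1r; apply: val_inj; rewrite /= Hz.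
  - move=> u Nu; have pu : u \in spanb x' by rewrite unfold_in; apply/asboolP/HN.
    by exists (SubN pu); rewrite scale1r.
have H23 : (forall p, prime_ideal p -> uS_coherent M (fun s => ~ p s)) ->
    forall m, maximal_ideal m -> uS_coherent M (fun s => ~ m s).
  by move=> H m Hm; apply: H; apply: max_prime.
have H31 : (forall m, maximal_ideal m -> uS_coherent M (fun s => ~ m s)) -> coherent M.
  move=> H3; split.
    have [|k [g [_ Hg]]] := glue (P := M) (X := fun _ => True).
      move=> mx Hm; have [s [ns [[n [x Hx]] _]]] := H3 mx Hm.
      by exists s; split=> //; exists n, x; split=> // c _; apply: Hx.
    by exists k, g => m; split=> // _; rewrite -[m]scale1r; apply: Hg.
  move=> N [n [y Hy]]; exists n, y; split=> //.
  have [|k [g [Hg Hc]]] := glue (P := 'rV[R]_n) (X := fun c => comb y c = 0).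
    move=> mx Hm; have [s [ns [_ Hc]]] := H3 mx Hm.
    have fgN : fg_sub N by exists n, y.
    have [F [f [Ffp [Fim [Fker Fcok]]]]] := Hc N fgN.
    exists (s * s); split.
      by move=> mss; have [_ [_ Pp]] := max_prime Hm; case: (Pp _ _ mss).
    apply: (local_syz Ffp) => [z|z|u Hu]; first exact/Hy.
      exact: Fker.
    by apply: Fcok; apply/Hy.
  exists k, g => c; split=> [Kc|[d ->]].
    by rewrite -[c]scale1r; apply: Hc.
  change (comb y (\sum_i d i *: g i) = 0); rewrite comb_sum big1 // => i _.
  by rewrite Hg scaler0.
split; split.
- exact: H12.
- by move=> H; apply: H31; apply: H23.
- exact: H23.
- by move=> H; apply: H12; apply: H31.
Qed.
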